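(* Let $G=(V,E)$ be a finite graph without loops and $e=uv\in E$. Let $G/e$ denote the contraction of $e$: the vertices $u$ and $v$ are replaced by a single new vertex $w$, and the edges incident to $w$ are exactly the edges other than $e$ that were incident with $u$ or $v$ (so $G/e$ has one edge fewer than $G$). Then $$\gamma_{coe}(G)-2\leq \gamma_{coe}(G/e)\leq \gamma_{coe}(G).$$
   Context: Graphs have no loops. For a graph $G=(V,E)$ and $x\in V$, $\deg(x)$ is the number of edges incident to $x$. A set $D\subseteq V$ is a dominating set if every vertex of $V\setminus D$ is adjacent to at least one vertex of $D$. A dominating set $D$ is a co-even dominating set if $\deg(x)$ is even for every $x\in V\setminus D$ (degrees taken in the graph under consideration). The co-even domination number $\gamma_{coe}(G)$ is the minimum cardinality of a co-even dominating set of $G$. *)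

(* Defs.v *)
From mathcomp Require Import all_boot.
Set Implicit Arguments. Unset Strict Implicit. Unset Printing Implicit Defensive.

(* A finite loopless multigraph on the vertex type T is given by its edge
   multiplicity function m : T -> T -> nat (m x y = number of edges between
   x and y), symmetric and zero on the diagonal. *)
Definition loopless_multigraph (T : finType) (m : T -> T -> nat) : Prop :=
  (forall x y, m x y = m y x) /\ (forall x, m x x = 0).

Definition deg (T : finType) (m : T -> T -> nat) (x : T) : nat :=
  \sum_(y : T) m x y.

Definition adjacent (T : finType) (m : T -> T -> nat) (x y : T) : bool :=
  0 < m x y.

Definition co_even_dominating (T : finType) (m : T -> T -> nat) (D : {set T}) : bool :=
  [forall x, (x \notin D) ==> ([exists y in D, adjacent m x y] && ~~ odd (deg m x))].

(* minimum cardinality of a co-even dominating set (V itself is one, so the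
   minimum is over a nonempty family and #|T| is a valid initial bound) *)
Definition gamma_coe (T : finType) (m : T -> T -> nat) : nat :=
  \big[minn/#|T|]_(D : {set T} | co_even_dominating m D) #|D|.

(* Contraction of the edge uv: vertex v is deleted and u plays the role of the
   new vertex w. *)
Definition contract (T : finType) (m : T -> T -> nat) (u v : T)
  (x y : {x : T | x != v}) : nat :=
  if val x == val y then 0 else
  m (val x) (val y)
  + (if val x == u then m v (val y) else 0)
  + (if val y == u then m (val x) v else 0).
Arguments contract {T} m u v x y.

(* Main.v *)
Require Import Defs.
From mathcomp Require Import all_boot.
From mathcomp Require Import zify.
Set Implicit Arguments. Unset Strict Implicit. Unset Printing Implicit Defensive.

Lemma sum_sig (T : finType) (v : T) (F : T -> nat) :
  \sum_(x : {x : T | x != v}) F (val x) = \sum_(x | x != v) F x.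
Proof.
rewrite [RHS](reindex_omap (val : {x : T | x != v} -> T) insub); last first.
  by move=> i Pi; rewrite insubT.
apply: eq_bigl=> -[i iA]/=; rewrite insubT ?iA /=.
by apply/esym/eqP; congr Some; apply: val_inj.
Qed.

Lemma gamma_le (T : finType) (m : T -> T -> nat) D :
  co_even_dominating m D -> gamma_coe m <= #|D|.
Proof.
move=> HD; rewrite /gamma_coe.
have: D \in index_enum {set T} by rewrite mem_index_enum.
elim: (index_enum _) => [|y r IH] //=; rewrite big_cons in_cons.
case/orP=> [/eqP <-|Dr]; first by rewrite HD geq_minl.
case: ifP => _; last exact: IH.
by rewrite geq_min IH // orbT.
Qed.

Lemma gamma_ex (T : finType) (m : T -> T -> nat) :
  exists2 D, co_even_dominating m D & #|D| = gamma_coe m.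
Proof.
rewrite /gamma_coe; apply: (big_ind (fun n => exists2 D, co_even_dominating m D & #|D| = n)).
- exists setT; last by rewrite cardsT.
  by apply/forallP=> x; rewrite in_setT.
- move=> a b [Da Ha Ea] [Db Hb Eb]; rewrite /minn; case: ltnP => _.
  by exists Da. by exists Db.
- by move=> D HD; exists D.
Qed.

Section S.
Variables (T : finType) (m : T -> T -> nat) (hG : loopless_multigraph m) (u v : T) (he : m u v = 1).

Let sym : forall x y, m x y = m y x. Proof. by case: hG. Qed.
Let irr : forall x, m x x = 0. Proof. by case: hG. Qed.
Let uv : u != v. Proof. by apply/eqP=> E; move: he; rewrite E irr. Qed.

Lemma deg_other (x : {x : T | x != v}) : val x != u ->
  deg (contract m u v) x = deg m (val x).
Proof.
move=> xu; rewrite /deg /contract.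
rewrite (sum_sig v (fun y => if val x == y then 0 else
  m (val x) y + (if val x == u then m v y else 0) + (if y == u then m (val x) v else 0))).
rewrite [RHS](bigD1 v) //= (negPf xu).
rewrite (bigD1 u) /=; last by rewrite uv.
rewrite (negPf xu) eqxx addn0.
rewrite [X in _ = _ + X](bigD1 u) /=; last by rewrite uv.
rewrite (eq_bigr (fun y => m (val x) y)); last first.
  move=> y /andP[yv yu]; rewrite (negPf yu) !addn0.
  by case: eqP => // <-; rewrite irr.
by rewrite addnCA addnA.
Qed.

Lemma deg_w (x : {x : T | x != v}) : val x = u ->
  deg (contract m u v) x + 2 = deg m u + deg m v.
Proof.
move=> xu; rewrite /deg /contract.
rewrite (sum_sig v (fun y => if val x == y then 0 else
  m (val x) y + (if val x == u then m v y else 0) + (if y == u then m (val x) v else 0))).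
rewrite xu eqxx.
rewrite [X in _ = X + _](bigD1 v) //= he.
rewrite [X in _ = _ + X](bigD1 v) //= irr add0n.
rewrite (bigD1 u) /=; last by rewrite uv.
rewrite eqxx.
rewrite [X in _ = _ + X + _](bigD1 u) /=; last by rewrite uv.
rewrite irr add0n.
rewrite [X in _ = _ + X](bigD1 u) /=; last by rewrite uv.
rewrite (sym v u) he.
rewrite (eq_bigr (fun y => m u y + m v y)); last first.
  by move=> y /andP[yv yu]; rewrite (negPf yu) eq_sym (negPf yu) addn0.
rewrite big_split /=. lia.
Qed.

Definition fw : {x : T | x != v} := exist _ u uv.
Definition f (x : T) : {x : T | x != v} := odflt fw (insub x).

Lemma val_f x : val (f x) = if x == v then u else x.
Proof.
rewrite /f; case: insubP => [y xv E|]; first by rewrite /= E (negPf xv).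
by rewrite negbK => /eqP ->; rewrite eqxx.
Qed.

Lemma contract_ge (a b : {x : T | x != v}) : val a != val b ->
  m (val a) (val b) <= contract m u v a b.
Proof. by rewrite /contract => /negPf ->; rewrite -addnA leq_addr. Qed.

Lemma contract_u (a b : {x : T | x != v}) : val a != u -> val b = u ->
  contract m u v a b = m (val a) u + m (val a) v.
Proof.
rewrite /contract => au bu; rewrite bu (negPf au) eqxx.
by rewrite addn0.
Qed.

Lemma partA D : co_even_dominating m D ->
  co_even_dominating (contract m u v) (f @: D).
Proof.
move=> /forallP HD; apply/forallP => x; apply/implyP => xD.
have xv : val x != v := valP x.
case: (eqVneq (val x) u) => xu.
- have uD : u \notin D.
    apply/negP=> uD; move: xD; rewrite (_ : x = f u) ?imset_f //.
    by apply: val_inj; rewrite val_f (negPf uv) xu.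
  have vD : v \notin D.
    apply/negP=> vD; move: xD; rewrite (_ : x = f v) ?imset_f //.
    by apply: val_inj; rewrite val_f eqxx xu.
  have /andP[/existsP[y /andP[yD ady]] ev] := implyP (HD u) uD.
  have /andP[_ evv] := implyP (HD v) vD.
  apply/andP; split.
  + apply/existsP; exists (f y); rewrite imset_f //=.
    have yv : y != v by apply: contraNneq vD => <-.
    have yu : y != u by apply: contraNneq uD => <-.
    rewrite /adjacent; apply: (leq_trans ady).
    have := contract_ge (a := x) (b := f y); rewrite val_f (negPf yv) xu.
    by apply; rewrite eq_sym.
  + have := deg_w xu => /(congr1 odd); rewrite !oddD (negPf ev) (negPf evv) /=.
    by rewrite addbF => ->.
- have xD' : val x \notin D.
    apply/negP=> vxD; move: xD; rewrite (_ : x = f (val x)) ?imset_f //.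
    by apply: val_inj; rewrite val_f (negPf xv).
  have /andP[/existsP[y /andP[yD ady]] ev] := implyP (HD (val x)) xD'.
  apply/andP; split; last by rewrite deg_other.
  apply/existsP; exists (f y); rewrite imset_f //=.
  rewrite /adjacent; case: (eqVneq y v) => yv.
  + rewrite contract_u //; last by rewrite val_f yv eqxx.
    by rewrite addn_gt0; apply/orP; right; subst y.
  + apply: (leq_trans ady).
    have := contract_ge (a := x) (b := f y); rewrite val_f (negPf yv).
    by apply; apply: contraTneq ady => E; rewrite /adjacent E irr.
Qed.

Lemma partB D' : co_even_dominating (contract m u v) D' ->
  co_even_dominating m ((val @: D') :|: [set u; v]).
Proof.
move=> /forallP HD; apply/forallP => x; apply/implyP.
rewrite !inE negb_or !negb_or => /and3P[xD xu xv].
pose x' : {x : T | x != v} := exist _ x xv.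
have xD' : x' \notin D'.
  by apply: contra xD => h; apply/imsetP; exists x'.
have /andP[/existsP[y /andP[yD ady]] ev] := implyP (HD x') xD'.
apply/andP; split; last by rewrite -(deg_other (x := x')).
case: (eqVneq (val y) u) => yu.
- move: ady; rewrite /adjacent contract_u // addn_gt0 => /orP[h|h].
  + apply/existsP; exists u; rewrite h !inE eqxx /=.
    by rewrite orbT.
  + apply/existsP; exists v; rewrite h !inE eqxx /=.
    by rewrite !orbT.
- apply/existsP; exists (val y); rewrite inE imset_f //=.
  move: ady; rewrite /adjacent /contract /= (negPf yu) (negPf xu) !addn0.
  by case: ifP.
Qed.
End S.

Unset Implicit Arguments.
Set Strict Implicit.

Theorem mainTheorem6 (T : finType) (m : T -> T -> nat)
  (hG : loopless_multigraph m) (u v : T) (he : m u v = 1) :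
  gamma_coe m <= gamma_coe (contract m u v) + 2 /\
  gamma_coe (contract m u v) <= gamma_coe m.
Proof.
split.
- have [D' HD' <-] := gamma_ex (contract m u v).
  apply: leq_trans (gamma_le (partB hG he HD')) _.
  apply: leq_trans (leq_card_setU _ _) _.
  apply: leq_add; first exact: leq_imset_card.
  by rewrite cards2; case: (u != v).
- have [D HD <-] := gamma_ex m.
  apply: leq_trans (gamma_le (partA hG he HD)) _.
  exact: leq_imset_card.
Qed.
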